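(* Let $H$ be a finite dimensional hereditary algebra over a field, and let $M$ and $X$ be finitely generated $H$-modules with $\operatorname{Ext}^1_H(M,M)=0$. Then $\operatorname{Hom}_H(\operatorname{rej}_M X, M)=0$.
   Context: For $H$-modules $M$ and $X$, the reject of $M$ in $X$ is the submodule $\operatorname{rej}_M X=\bigcap_{f\colon X\to M}\operatorname{Ker} f$ of $X$, the intersection over all $H$-homomorphisms $f\colon X\to M$. *)

(* Defs.v *)
From HB Require Import structures.
From mathcomp Require Import all_boot all_algebra all_field.
Set Implicit Arguments. Unset Strict Implicit. Unset Printing Implicit Defensive.
Import GRing.Theory.
Local Open Scope ring_scope.

(* A finite-dimensional algebra over a field F is [H : falgType F].
   (Left) H-modules are [lmodType H]; H-homomorphisms are [{linear U -> V}]. *)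

Section ModDefs.
Variables (F : fieldType) (H : falgType F).

Definition fin_gen (X : lmodType H) : Prop :=
  exists s : seq X, forall x : X,
    exists c : 'I_(size s) -> H, x = \sum_(i < size s) c i *: s`_i.

Definition projective (P : lmodType H) : Prop :=
  forall (A B : lmodType H) (p : {linear A -> B}) (f : {linear P -> B}),
    (forall b : B, exists a : A, p a = b) -> exists g : {linear P -> A}, forall x, p (g x) = f x.

Definition hereditary : Prop :=
  forall (P S : lmodType H) (i : {linear S -> P}),
    injective i -> projective P -> projective S.

Definition short_exact (N E M : lmodType H)
  (i : {linear N -> E}) (p : {linear E -> M}) : Prop :=
  [/\ injective i, (forall m : M, exists e : E, p e = m) & forall e, p e = 0 <-> exists n, e = i n].

(* Ext^1_H(M, N) = 0 : every extension of M by N splits (Yoneda Ext^1) *)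
Definition Ext1_zero (M N : lmodType H) : Prop :=
  forall (E : lmodType H) (i : {linear N -> E}) (p : {linear E -> M}),
    short_exact i p -> exists s : {linear M -> E}, forall m, p (s m) = m.

Definition in_rej (M X : lmodType H) (x : X) : Prop :=
  forall f : {linear X -> M}, f x = 0.

End ModDefs.

(* Main.v *)
Require Import Defs.
From HB Require Import structures.
From mathcomp Require Import all_boot all_algebra all_field.
From Stdlib Require Import ClassicalEpsilon FunctionalExtensionality PropExtensionality ProofIrrelevance.
Set Implicit Arguments. Unset Strict Implicit. Unset Printing Implicit Defensive.
Import GRing.Theory.
Local Open Scope ring_scope.

Definition pb (P : Prop) : bool := if excluded_middle_informative P then true else false.
Lemma pbP P : reflect P (pb P).
Proof. rewrite /pb; case: excluded_middle_informative => h; by constructor. Qed.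

Record submod (R : pzRingType) (V : lmodType R) := Submod {
  spred :> V -> Prop;
  spred0 : spred 0;
  spredL : forall a u v, spred u -> spred v -> spred (a *: u + v) }.

Record subm (R : pzRingType) (V : lmodType R) (S : submod V) :=
  Subm { subv : V; sprop : pb (S subv) }.
HB.instance Definition _ R V S := [isSub for @subv R V S].
HB.instance Definition _ R V S := [Choice of @subm R V S by <:].

Section SubLemmas.
Variables (R : pzRingType) (V : lmodType R) (S : submod V).
Lemma subP (u : subm S) : S (subv u). Proof. exact/pbP/sprop. Qed.
Lemma pS u : S u -> pb (S u). Proof. by move/pbP. Qed.
Lemma spredD u v : S u -> S v -> S (u + v).
Proof. by move=> hu hv; have := spredL 1 hu hv; rewrite scale1r. Qed.
Lemma spredZ a u : S u -> S (a *: u).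
Proof. by move=> hu; have := spredL a hu (spred0 S); rewrite addr0. Qed.
Lemma spredN u : S u -> S (- u).
Proof. by move=> hu; have := spredZ (-1) hu; rewrite scaleN1r. Qed.
Lemma spredB u v : S u -> S v -> S (u - v).
Proof. by move=> hu hv; apply: spredD => //; apply: spredN. Qed.

Definition s0 : subm S := Subm (pS (spred0 S)).
Definition sadd (u v : subm S) : subm S := Subm (pS (spredD (subP u) (subP v))).
Definition sopp (u : subm S) : subm S := Subm (pS (spredN (subP u))).
Definition sscale a (u : subm S) : subm S := Subm (pS (spredZ a (subP u))).
Lemma saddA : associative sadd. Proof. by move=> x y z; apply: val_inj; rewrite /= addrA. Qed.
Lemma saddC : commutative sadd. Proof. by move=> x y; apply: val_inj; rewrite /= addrC. Qed.
Lemma sadd0 : left_id s0 sadd. Proof. by move=> x; apply: val_inj; rewrite /= add0r. Qed.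
Lemma saddN : left_inverse s0 sopp sadd. Proof. by move=> x; apply: val_inj; rewrite /= addNr. Qed.
End SubLemmas.

HB.instance Definition _ R V S := GRing.isZmodule.Build (@subm R V S)
  (@saddA R V S) (@saddC R V S) (@sadd0 R V S) (@saddN R V S).

Section SubLemmas2.
Variables (R : pzRingType) (V : lmodType R) (S : submod V).
Lemma sscaleA a b (v : subm S) : sscale a (sscale b v) = sscale (a * b) v.
Proof. by apply: val_inj; rewrite /= scalerA. Qed.
Lemma sscale1 : left_id 1 (@sscale _ _ S).
Proof. by move=> v; apply: val_inj; rewrite /= scale1r. Qed.
Lemma sscaleDr : right_distributive (@sscale _ _ S) +%R.
Proof. by move=> a u v; apply: val_inj; rewrite /= scalerDr. Qed.
Lemma sscaleDl (v : subm S) : forall a b, sscale (a + b) v = sscale a v + sscale b v.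
Proof. by move=> a b; apply: val_inj; rewrite /= scalerDl. Qed.
End SubLemmas2.

HB.instance Definition _ R V S := GRing.Zmodule_isLmodule.Build R (@subm R V S)
  (@sscaleA R V S) (@sscale1 R V S) (@sscaleDr R V S) (@sscaleDl R V S).



Section Rep.
Variables (R : pzRingType) (T : lmodType R) (Z : submod T).
Definition rep (x : T) : T := epsilon (inhabits x) (fun y => Z (x - y)).
Lemma rep_spec x : Z (x - rep x).
Proof. apply: (epsilon_spec (inhabits x) (fun y => Z (x - y))); exists x; rewrite subrr; exact: spred0. Qed.
Lemma rep_eq x y : Z (x - y) -> rep x = rep y.
Proof.
move=> hxy; rewrite /rep.
have -> : (fun w => Z (x - w)) = (fun w => Z (y - w)).
  apply: functional_extensionality => w; apply: propositional_extensionality; split=> h.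
  - have := spredB h hxy; congr (Z _); by rewrite opprB addrC addrA subrK.
  - have := spredD hxy h; congr (Z _); by rewrite addrA subrK.
by rewrite (proof_irrelevance _ (inhabits x) (inhabits y)).
Qed.
Lemma rep_spec' x : Z (rep x - x).
Proof. by have := spredN (rep_spec x); rewrite opprB. Qed.
Lemma rep_idem x : rep (rep x) = rep x.
Proof. by symmetry; apply: rep_eq; apply: rep_spec. Qed.
End Rep.

Record quo (R : pzRingType) (T : lmodType R) (Z : submod T) :=
  Quo { qv : T; qprop : rep Z qv == qv }.
HB.instance Definition _ R T Z := [isSub for @qv R T Z].
HB.instance Definition _ R T Z := [Choice of @quo R T Z by <:].

Section QuoLemmas.
Variables (R : pzRingType) (T : lmodType R) (Z : submod T).
Definition qpi (x : T) : quo Z := @Quo _ _ Z (rep Z x) (introT eqP (rep_idem Z x)).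
Lemma qpi_eq x y : Z (x - y) -> qpi x = qpi y.
Proof. by move=> h; apply: val_inj => /=; apply: rep_eq. Qed.
Lemma qpi_eqP x y : qpi x = qpi y -> Z (x - y).
Proof.
move/(congr1 (@qv _ _ _)) => /= e.
have h1 := rep_spec Z x; have h2 := rep_spec Z y.
have := spredB h1 h2; rewrite e; congr (Z _).
by rewrite opprB addrA subrK.
Qed.
Lemma qpi_qv (u : quo Z) : qpi (qv u) = u.
Proof. by apply: val_inj => /=; apply/eqP; case: u. Qed.
Lemma qpi_rep x : qpi (rep Z x) = qpi x.
Proof. by apply: val_inj => /=; rewrite rep_idem. Qed.
Lemma qv_qpi x : qv (qpi x) = rep Z x. Proof. by []. Qed.

Definition q0 : quo Z := qpi 0.
Definition qadd (u v : quo Z) : quo Z := qpi (qv u + qv v).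
Definition qopp (u : quo Z) : quo Z := qpi (- qv u).
Definition qscale a (u : quo Z) : quo Z := qpi (a *: qv u).

Lemma qaddE x y : qadd (qpi x) (qpi y) = qpi (x + y).
Proof.
apply: qpi_eq => /=; rewrite opprD addrACA.
exact: spredD (rep_spec' Z x) (rep_spec' Z y).
Qed.
Lemma qoppE x : qopp (qpi x) = qpi (- x).
Proof.
apply: qpi_eq => /=; rewrite opprK addrC.
exact: rep_spec Z x.
Qed.
Lemma qscaleE a x : qscale a (qpi x) = qpi (a *: x).
Proof.
apply: qpi_eq => /=; rewrite -scalerBr.
apply: spredZ; exact: rep_spec'.
Qed.
Lemma qind (P : quo Z -> Prop) : (forall x, P (qpi x)) -> forall u, P u.
Proof. by move=> h u; rewrite -(qpi_qv u). Qed.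

Lemma qaddA : associative qadd.
Proof. by elim/qind=> x; elim/qind=> y; elim/qind=> z; rewrite !qaddE addrA. Qed.
Lemma qaddC : commutative qadd.
Proof. by elim/qind=> x; elim/qind=> y; rewrite !qaddE addrC. Qed.
Lemma qadd0 : left_id q0 qadd.
Proof. by elim/qind=> x; rewrite /q0 qaddE add0r. Qed.
Lemma qaddN : left_inverse q0 qopp qadd.
Proof. by elim/qind=> x; rewrite qoppE qaddE addNr. Qed.
End QuoLemmas.

HB.instance Definition _ R T Z := GRing.isZmodule.Build (@quo R T Z)
  (@qaddA R T Z) (@qaddC R T Z) (@qadd0 R T Z) (@qaddN R T Z).

Section QuoLemmas2.
Variables (R : pzRingType) (T : lmodType R) (Z : submod T).
Lemma qscaleA a b (v : quo Z) : qscale a (qscale b v) = qscale (a * b) v.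
Proof. by elim/qind: v => x; rewrite !qscaleE scalerA. Qed.
Lemma qscale1 : left_id 1 (@qscale _ _ Z).
Proof. by elim/qind=> x; rewrite qscaleE scale1r. Qed.
Lemma qscaleDr : right_distributive (@qscale _ _ Z) (@qadd _ _ Z).
Proof. by move=> a; elim/qind=> x; elim/qind=> y; rewrite qaddE !qscaleE qaddE scalerDr. Qed.
Lemma qscaleDl (v : quo Z) : forall a b, qscale (a + b) v = qadd (qscale a v) (qscale b v).
Proof. by elim/qind: v => x a b; rewrite !qscaleE qaddE scalerDl. Qed.
End QuoLemmas2.

HB.instance Definition _ R T Z := GRing.Zmodule_isLmodule.Build R (@quo R T Z)
  (@qscaleA R T Z) (@qscale1 R T Z) (@qscaleDr R T Z) (@qscaleDl R T Z).


Lemma qpi_lin (R : pzRingType) (T : lmodType R) (Z : submod T) : linear (@qpi _ _ Z).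
Proof. by move=> a x y; rewrite -qaddE -qscaleE. Qed.

Definition mkLin (R : pzRingType) (U V : lmodType R) (f : U -> V) (lf : linear f) : {linear U -> V} :=
  HB.pack f (GRing.isLinear.Build R U V *:%R f lf).
Lemma mkLinE (R : pzRingType) (U V : lmodType R) (f : U -> V) (lf : linear f) x : mkLin lf x = f x.
Proof. by []. Qed.

Section ExtExtend.
Variables (F : fieldType) (H : falgType F) (M P : lmodType H).
Hypothesis Ext : Ext1_zero M M.
Variables (p : {linear P -> M}) (psurj : forall m, exists y, p y = m).
Variables (h : P -> M)
  (hlin : forall a u v, p u = 0 -> p v = 0 -> h (a *: u + v) = a *: h u + h v).

Lemma h0 : h 0 = 0.
Proof.
have e := hlin 1 (linear0 p) (linear0 p).
rewrite scale1r addr0 scale1r in e.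
by apply: (addrI (h 0)); rewrite addr0 -e.
Qed.

Definition Zp (w : M * P) : Prop := exists k, p k = 0 /\ w = (- h k, k).
Lemma Zp0 : Zp 0.
Proof. by exists 0; rewrite linear0 h0 oppr0. Qed.
Lemma ZpL a u v : Zp u -> Zp v -> Zp (a *: u + v).
Proof.
move=> [k1 [p1 ->]] [k2 [p2 ->]]; exists (a *: k1 + k2); split.
  by rewrite linearP p1 p2 scaler0 addr0.
rewrite hlin //; apply: injective_projections => /=.
  by rewrite opprD scalerN.
by [].
Qed.
Definition Zs : submod (M * P)%type := Submod Zp0 ZpL.
Definition E := quo Zs.
Definition iE (m : M) : E := qpi Zs (m, 0).
Lemma iE_lin : linear iE.
Proof. move=> a x y; rewrite /iE -qpi_lin; congr qpi; apply: injective_projections => /=; by rewrite ?scaler0 ?addr0. Qed.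
Lemma p_rep w : p (rep Zs w).2 = p w.2.
Proof.
have [k [pk e]] := rep_spec' Zs w.
have : (rep Zs w - w).2 = k by rewrite e.
move=> /= e2; apply/eqP; rewrite -subr_eq0 -linearB /= e2 pk //.
Qed.
Definition qE (e : E) : M := p (qv e).2.
Lemma qE_qpi w : qE (qpi Zs w) = p w.2.
Proof. exact: p_rep. Qed.
Lemma qE_lin : linear qE.
Proof.
move=> a; elim/qind => x; elim/qind => y.
by rewrite -qpi_lin !qE_qpi /= linearP.
Qed.
Definition iL := mkLin iE_lin.
Definition qL := mkLin qE_lin.

Lemma iE_inj : injective iE.
Proof.
move=> m m' /qpi_eqP [k [pk e]].
have e2 : k = 0 by have := congr1 snd e; rewrite /= subrr.
have e1 := congr1 fst e; move: e1; rewrite /= e2 h0 oppr0.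
by move/eqP; rewrite subr_eq0 => /eqP.
Qed.

Lemma sexact : short_exact iL qL.
Proof.
split.
- exact: iE_inj.
- move=> m; have [y py] := psurj m; exists (qpi Zs (0, y)).
  by rewrite mkLinE qE_qpi.
- elim/qind => w; rewrite mkLinE qE_qpi; split.
  + move=> pw; exists (w.1 + h w.2); rewrite mkLinE /iE; apply: qpi_eq.
    exists w.2; split => //; case: w pw => a b /= pw.
    apply: injective_projections => /=; first by rewrite opprD addrA subrr add0r.
    by rewrite subr0.
  + move=> [n e]; have := congr1 qE e; rewrite mkLinE /iE !qE_qpi /= linear0; exact.
Qed.

Lemma ext_extend : exists G : P -> M, linear G /\ forall k, p k = 0 -> G k = h k.
Proof.
have [s hs] := Ext sexact.
pose d (y : P) : E := qpi Zs (0, y) - s (p y).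
have dex y : exists n, iE n = d y.
  have : qL (d y) = 0.
    by rewrite linearB hs [qL _]mkLinE qE_qpi /= subrr.
  move=> hq; case: (sexact) => _ _ /(_ (d y)) [hh _]; have [n e] := hh hq; by exists n; rewrite e.
pose G y := epsilon (inhabits 0) (fun n => iE n = d y).
have GP y : iE (G y) = d y.
  by apply: (epsilon_spec (inhabits 0) (fun n => iE n = d y)); exact: dex.
exists G; split.
  move=> a u v; apply: iE_inj; rewrite iE_lin !GP /d.
  have hq : qpi Zs (0, a *: u + v) = a *: qpi Zs (0, u) + qpi Zs (0, v).
    rewrite -qpi_lin; congr qpi; apply: injective_projections => /=;
    by rewrite ?scaler0 ?addr0.
  by rewrite linearP [s _]linearP hq scalerBr addrACA opprD.
move=> k pk; apply: iE_inj; rewrite GP /d pk linear0 subr0 /iE.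
apply: qpi_eq; exists k; split => //.
by apply: injective_projections => /=; rewrite ?sub0r ?subr0.
Qed.
End ExtExtend.


Section Free.
Variables (F : fieldType) (H : falgType F).

Lemma free_proj k : projective ('rV[H]_k).
Proof.
move=> A B p f psurj.
pose a j := epsilon (inhabits 0) (fun z : A => p z = f (delta_mx 0 j)).
have ha j : p (a j) = f (delta_mx 0 j).
  apply: (epsilon_spec (inhabits 0) (fun z : A => p z = f (delta_mx 0 j))); exact: psurj.
pose g (u : 'rV[H]_k) := \sum_j u 0 j *: a j.
have lg : linear g.
  move=> c u v; rewrite /g scaler_sumr -big_split /=; apply: eq_bigr => j _.
  by rewrite !mxE scalerDl scalerA.
exists (mkLin lg) => u; rewrite mkLinE /g linear_sum /=.
rewrite {2}(row_sum_delta u) linear_sum /=; apply: eq_bigr => j _.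
by rewrite !linearZ /= ha.
Qed.

Lemma fg_cover (X : lmodType H) : fin_gen X ->
  exists k, exists pi : {linear 'rV[H]_k -> X}, forall x, exists u, pi u = x.
Proof.
move=> [s hs]; exists (size s).
pose g (u : 'rV[H]_(size s)) := \sum_j u 0 j *: s`_j.
have lg : linear g.
  move=> c u v; rewrite /g scaler_sumr -big_split /=; apply: eq_bigr => j _.
  by rewrite !mxE scalerDl scalerA.
exists (mkLin lg) => x; have [c ->] := hs x.
by exists (\row_j c j); rewrite mkLinE /g; apply: eq_bigr => j _; rewrite mxE.
Qed.
End Free.


Lemma subv_lin (R : pzRingType) (V : lmodType R) (S : submod V) : linear (@subv _ _ S).
Proof. by []. Qed.

Section ExtendKer.
Variables (F : fieldType) (H : falgType F) (M : lmodType H).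
Hypotheses (Hh : hereditary H) (fgM : fin_gen M) (Ext : Ext1_zero M M).

Lemma extend_ker (Y : lmodType H) (Yproj : projective Y) (th : {linear Y -> M})
  (h : Y -> M) (hlin : forall a u v, th u = 0 -> th v = 0 -> h (a *: u + v) = a *: h u + h v) :
  exists G : Y -> M, linear G /\ forall y, th y = 0 -> G y = h y.
Proof.
have [k [p psurj]] := fg_cover fgM.
have Pproj := @free_proj _ H k.
pose Np (m : M) := exists y, th y = m.
have Np0 : Np 0 by exists 0; rewrite linear0.
have NpL a u v : Np u -> Np v -> Np (a *: u + v).
  by move=> [y1 <-] [y2 <-]; exists (a *: y1 + y2); rewrite linearP.
pose N := Submod Np0 NpL.
pose Qp (z : 'rV[H]_k) := exists y, p z = th y.
have Qp0 : Qp 0 by exists 0; rewrite !linear0.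
have QpL a u v : Qp u -> Qp v -> Qp (a *: u + v).
  by move=> [y1 e1] [y2 e2]; exists (a *: y1 + y2); rewrite !linearP e1 e2.
pose Q := Submod Qp0 QpL.
have Qproj : projective (subm Q).
  apply: (Hh (i := mkLin (@subv_lin _ _ Q))) => //.
  by move=> x y /= e; apply: val_inj.
have pNp (z : subm Q) : Np (p (subv z)) by have [y e] := subP z; exists y.
pose p2 (z : subm Q) : subm N := Subm (@pS _ _ N _ (pNp z)).
have lp2 : linear p2 by move=> a u v; apply: val_inj; rewrite /= linearP.
have thNp y : Np (th y) by exists y.
pose th2 (y : Y) : subm N := Subm (@pS _ _ N _ (thNp y)).
have lth2 : linear th2 by move=> a u v; apply: val_inj; rewrite /= linearP.
have p2surj : forall n : subm N, exists z, mkLin lp2 z = n.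
  move=> n; have [y ey] := subP n; have [z ez] := psurj (th y).
  have qz : Qp z by exists y.
  by exists (Subm (@pS _ _ Q _ qz)); apply: val_inj; rewrite /= ez.
have th2surj : forall n : subm N, exists y, mkLin lth2 y = n.
  by move=> n; have [y ey] := subP n; exists y; apply: val_inj; rewrite /= ey.
have [al hal] := Yproj _ _ (mkLin lp2) (mkLin lth2) p2surj.
have [be hbe] := Qproj _ _ (mkLin lth2) (mkLin lp2) th2surj.
have thbe w : th (be w) = p (subv w) by have := congr1 (@subv _ _ N) (hbe w).
have thal y : p (subv (al y)) = th y by have := congr1 (@subv _ _ N) (hal y).
pose h' (z : 'rV[H]_k) : M :=
  match excluded_middle_informative (Qp z) with
  | left pf => h (be (Subm (@pS _ _ Q _ pf)))
  | right _ => 0 end.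
have h'E z (pf : Qp z) : h' z = h (be (Subm (@pS _ _ Q _ pf))).
  rewrite /h'; case: excluded_middle_informative => [pf'|n]; last by [].
  by congr (h (be _)); apply: val_inj.
have kerQ z : p z = 0 -> Qp z by move=> pz; exists 0; rewrite linear0.
have h'lin a u v : p u = 0 -> p v = 0 -> h' (a *: u + v) = a *: h' u + h' v.
  move=> pu pv.
  have puv : p (a *: u + v) = 0 by rewrite linearP pu pv scaler0 addr0.
  rewrite (h'E _ (kerQ _ puv)) (h'E _ (kerQ _ pu)) (h'E _ (kerQ _ pv)).
  have -> : Subm (@pS _ _ Q _ (kerQ _ puv)) = a *: Subm (@pS _ _ Q _ (kerQ _ pu)) + Subm (@pS _ _ Q _ (kerQ _ pv)).
    by apply: val_inj.
  by rewrite linearP hlin // thbe.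
have [G' [lG' hG']] := ext_extend Ext psurj h'lin.
pose G y := G' (subv (al y)) + h (y - be (al y)).
have thker y : th (y - be (al y)) = 0 by rewrite linearB /= thbe thal subrr.
exists G; split.
  move=> a u v; rewrite /G.
  have -> : al (a *: u + v) = a *: al u + al v by rewrite linearP.
  have -> : subv (a *: al u + al v) = a *: subv (al u) + subv (al v) by [].
  have -> : be (a *: al u + al v) = a *: be (al u) + be (al v) by rewrite linearP.
  rewrite lG'.
  have -> : a *: u + v - (a *: be (al u) + be (al v)) = a *: (u - be (al u)) + (v - be (al v)).
    by rewrite scalerBr addrACA opprD.
  by rewrite hlin // scalerDr addrACA.
move=> y thy; rewrite /G.
have pz : p (subv (al y)) = 0 by rewrite thal.
rewrite hG' // (h'E _ (kerQ _ pz)).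
have -> : Subm (@pS _ _ Q _ (kerQ _ pz)) = al y by apply: val_inj.
have t0 : th (be (al y)) = 0 by rewrite thbe.
have e := hlin 1 _ _ t0 (thker y); rewrite !scale1r in e.
by rewrite -e addrC subrK.
Qed.
End ExtendKer.


Section Main.
Variables (F : fieldType) (H : falgType F) (M X : lmodType H).

Fixpoint kerAll (fs : seq {linear X -> M}) (x : X) : Prop :=
  match fs with [::] => True | f :: fs' => f x = 0 /\ kerAll fs' x end.

Lemma kerAll0 fs : kerAll fs 0.
Proof. by elim: fs => //= f fs IH; rewrite linear0. Qed.
Lemma kerAllL fs a x y : kerAll fs x -> kerAll fs y -> kerAll fs (a *: x + y).
Proof.
elim: fs => //= f fs IH [fx kx] [fy ky]; split; last exact: IH.
by rewrite linearP fx fy scaler0 addr0.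
Qed.
Lemma rej_kerAll fs x : in_rej M x -> kerAll fs x.
Proof. by move=> hx; elim: fs => //= f fs IH; rewrite hx. Qed.

Hypotheses (Hh : hereditary H) (fgM : fin_gen M) (Ext : Ext1_zero M M).
Variables (k : nat) (pi : {linear 'rV[H]_k -> X}).

Lemma Sfs0 fs : kerAll fs (pi 0). Proof. by rewrite linear0; apply: kerAll0. Qed.
Lemma SfsL fs a u v : kerAll fs (pi u) -> kerAll fs (pi v) -> kerAll fs (pi (a *: u + v)).
Proof. by rewrite linearP; apply: kerAllL. Qed.
Definition Sfs fs := Submod (@Sfs0 fs) (@SfsL fs).

Lemma extend_fs fs : forall h : 'rV[H]_k -> M,
  (forall a u v, kerAll fs (pi u) -> kerAll fs (pi v) -> h (a *: u + v) = a *: h u + h v) ->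
  exists G : 'rV[H]_k -> M, linear G /\ forall y, kerAll fs (pi y) -> G y = h y.
Proof.
elim: fs => [|f fs IH] h hlin.
  by exists h; split => // a u v; apply: hlin.
have Yproj : projective (subm (Sfs fs)).
  apply: (Hh (i := mkLin (@subv_lin _ _ (Sfs fs)))); last exact: free_proj.
  by move=> x y /= e; apply: val_inj.
have lth : linear (fun z : subm (Sfs fs) => f (pi (subv z))).
  by move=> a u v; rewrite /= !linearP.
pose hY (z : subm (Sfs fs)) := h (subv z).
have hYlin a u v : mkLin lth u = 0 -> mkLin lth v = 0 -> hY (a *: u + v) = a *: hY u + hY v.
  rewrite !mkLinE => fu fv; rewrite /hY /= hlin //=; split => //; first [exact (subP u) | exact (subP v)].
have [G1 [lG1 hG1]] := extend_ker Hh fgM Ext Yproj hYlin.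
pose h1 (y : 'rV[H]_k) : M :=
  match excluded_middle_informative (kerAll fs (pi y)) with
  | left pf => G1 (Subm (@pS _ _ (Sfs fs) _ pf))
  | right _ => 0 end.
have h1E y (pf : kerAll fs (pi y)) : h1 y = G1 (Subm (@pS _ _ (Sfs fs) _ pf)).
  rewrite /h1; case: excluded_middle_informative => [pf'|n]; last by [].
  by congr (G1 _); apply: val_inj.
have h1lin a u v : kerAll fs (pi u) -> kerAll fs (pi v) -> h1 (a *: u + v) = a *: h1 u + h1 v.
  move=> ku kv; rewrite (h1E _ (SfsL a ku kv)) (h1E _ ku) (h1E _ kv) -lG1.
  by congr (G1 _); apply: val_inj.
have [G [lG hG]] := IH h1 h1lin.
exists G; split => // y /= [fy ky].
rewrite hG // (h1E _ ky) hG1 //.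
Qed.
End Main.

Theorem main_with_fin (F : fieldType) (H : falgType F) (M X : lmodType H) :
  hereditary H -> fin_gen M -> fin_gen X -> Ext1_zero M M ->
  (exists fs : seq {linear X -> M}, forall x, kerAll fs x -> in_rej M x) ->
  forall g : X -> M,
    (forall (a : H) (x y : X), in_rej M x -> in_rej M y ->
        g (a *: x + y) = a *: g x + g y) ->
    forall x : X, in_rej M x -> g x = 0.
Proof.
move=> Hh fgM fgX Ext [fs hfs] g glin x xrej.
have [k [pi pisurj]] := fg_cover fgX.
have g0 : g 0 = 0.
  have r0 : in_rej M (0 : X) by move=> f; rewrite linear0.
  have e := glin 1 _ _ r0 r0; rewrite !scale1r addr0 in e.
  by apply: (addrI (g 0)); rewrite addr0 -e.
pose h (u : 'rV[H]_k) := g (pi u).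
have hlin a u v : kerAll fs (pi u) -> kerAll fs (pi v) -> h (a *: u + v) = a *: h u + h v.
  by move=> ku kv; rewrite /h linearP glin //; apply: hfs.
have [G [lG hG]] := extend_fs Hh fgM Ext hlin.
pose pre (z : X) := epsilon (inhabits 0) (fun u => pi u = z).
have preP z : pi (pre z) = z.
  by apply: (epsilon_spec (inhabits 0) (fun u => pi u = z)); exact: pisurj.
pose GL := mkLin lG.
have Gker d : pi d = 0 -> G d = 0.
  by move=> pd; rewrite hG /h ?pd // ; apply: kerAll0.
have lf0 : linear (fun z => G (pre z)).
  move=> a z1 z2; rewrite -lG; apply/eqP; rewrite -subr_eq0.
  have -> : G (pre (a *: z1 + z2)) - G (a *: pre z1 + pre z2) = GL (pre (a *: z1 + z2) - (a *: pre z1 + pre z2)).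
    by rewrite linearB.
  by rewrite mkLinE Gker // linearB linearP !preP subrr.
have := xrej (mkLin lf0); rewrite mkLinE hG; last by rewrite preP; apply: rej_kerAll.
by rewrite /h preP.
Qed.

From mathcomp Require Import zify.
From Stdlib Require Import Classical.

Lemma pred_vspace (K : fieldType) (V : vectType K) (S : V -> Prop) :
  S 0 -> (forall a u v, S u -> S v -> S (a *: u + v)) ->
  exists U : {vspace V}, forall v, v \in U <-> S v.
Proof.
move=> S0 SL.
suff: forall n (U : {vspace V}), (forall v, v \in U -> S v) -> (\dim {:V} - \dim U <= n)%N ->
  exists U : {vspace V}, forall v, v \in U <-> S v.
  by move/(_ (\dim {:V}) 0%VS); apply=> [v|]; [rewrite memv0 => /eqP ->| rewrite leq_subr].
elim=> [|n IH] U sUS hdim.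
  exists U => v; split; first exact: sUS.
  move=> Sv; apply: NNPP => nv.
  have sU2 : (U <= U + <[v]>)%VS by apply: addvSl.
  have := dimv_leqif_eq sU2; case => le eqC.
  have vU2 : v \in (U + <[v]>)%VS by apply: (subvP (addvSr U <[v]>)); apply: memv_line.
  have neq : (U == U + <[v]>)%VS = false.
    by apply/negbTE/eqP => e; apply: nv; rewrite e.
  have lt : (\dim U < \dim (U + <[v]>)%VS)%N by rewrite ltn_neqAle le eqC neq.
  have := dimvS (subvf (U + <[v]>)%VS); lia.
case: (classic (forall v, S v -> v \in U)) => [hU|].
  by exists U; move=> v; split; [apply: sUS | apply: hU].
move=> /not_all_ex_not [v hv]; have [Sv nv] := imply_to_and _ _ hv.
have sU2 : (U <= U + <[v]>)%VS by apply: addvSl.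
have := dimv_leqif_eq sU2; case => le eqC.
have vU2 : v \in (U + <[v]>)%VS by apply: (subvP (addvSr U <[v]>)); apply: memv_line.
have neq : (U == U + <[v]>)%VS = false.
  by apply/negbTE/eqP => e; apply: nv; rewrite e.
have lt : (\dim U < \dim (U + <[v]>)%VS)%N by rewrite ltn_neqAle le eqC neq.
apply: (IH (U + <[v]>)%VS).
  move=> w /memv_addP [u uU [l /vlineP [c ->] ->]].
  by rewrite addrC; apply: SL => //; apply: sUS.
have := dimvS (subvf (U + <[v]>)%VS); lia.
Qed.


Lemma finite_rej (F : fieldType) (H : falgType F) (M X : lmodType H) : fin_gen X ->
  exists fs : seq {linear X -> M}, forall x, kerAll fs x -> in_rej M x.
Proof.
move=> [s hs].
pose piF (v : {ffun 'I_(size s) -> H}) : X := \sum_j v j *: s`_j.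
have piL (c : F) (v w : {ffun 'I_(size s) -> H}) : piF (c *: v + w) = c%:A *: piF v + piF w.
  rewrite /piF scaler_sumr -big_split; apply: eq_bigr => j _ /=.
  by rewrite !ffunE scalerDl scalerA mulr_algl.
have pisurj x : exists v, piF v = x.
  have [c ->] := hs x; exists [ffun i => c i]; rewrite /piF.
  by apply: eq_bigr => j _; rewrite ffunE.
pose K fs v := kerAll (M := M) fs (piF v).
have K0 fs : K fs 0.
  rewrite /K /piF big1; first exact: kerAll0.
  by move=> j _; rewrite ffunE scale0r.
have KL fs a u v : K fs u -> K fs v -> K fs (a *: u + v).
  by rewrite /K piL; apply: kerAllL.
apply: NNPP => hno.
have step fs : exists f : {linear X -> M}, exists v, K fs v /\ ~ K (f :: fs) v.
  have [x hx] : exists x, ~ (kerAll fs x -> in_rej M x).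
    by apply: not_all_ex_not => hall; apply: hno; exists fs.
  have [kx nrej] := imply_to_and _ _ hx.
  have [f nf] := not_all_ex_not _ _ nrej.
  have [v ev] := pisurj x.
  by exists f, v; rewrite /K ev; split => // [[]].
have claim n : exists fs, exists U : {vspace {ffun 'I_(size s) -> H}}, (forall v, v \in U <-> K fs v) /\
    (\dim U + n <= \dim {:{ffun 'I_(size s) -> H}})%N.
  elim: n => [|n [fs [U [hU hd]]]].
    have [U hU] := pred_vspace (K0 [::]) (@KL [::]).
    by exists [::], U; split => //; rewrite addn0; apply: dimvS; apply: subvf.
  have [f [v [Kv nK]]] := step fs.
  have [U' hU'] := pred_vspace (K0 (f :: fs)) (@KL (f :: fs)).
  have sub : (U' <= U)%VS by apply/subvP => w /hU' [_ kw]; apply/hU.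
  have := dimv_leqif_eq sub; case => le eqC.
  have neq : (U' == U) = false.
    apply/negbTE/eqP => e; apply: nK; apply/hU'; rewrite e; exact/hU.
  have lt : (\dim U' < \dim U)%N by rewrite ltn_neqAle le eqC neq.
  exists (f :: fs), U'; split => //; rewrite addnS; apply: leq_trans hd; by rewrite -addSn leq_add2r.
have [fs [U [_ hd]]] := claim (\dim {:{ffun 'I_(size s) -> H}}).+1.
lia.
Qed.

Theorem lemma2p3 (F : fieldType) (H : falgType F) (M X : lmodType H) :
  hereditary H -> fin_gen M -> fin_gen X -> Ext1_zero M M ->
  forall g : X -> M,
    (forall (a : H) (x y : X), in_rej M x -> in_rej M y ->
        g (a *: x + y) = a *: g x + g y) ->
    forall x : X, in_rej M x -> g x = 0.
Proof.
move=> Hh fgM fgX Ext; apply: main_with_fin => //.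
exact: finite_rej.
Qed.
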